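(* Let $\Lambda\subset\mathbb Z$ be a finite interval which is the union of three consecutive intervals $\Lambda_l,\Lambda_m,\Lambda_r$ (in this order), and put $\Lambda_1=\Lambda_l\cup\Lambda_m$, $\Lambda_2=\Lambda_m\cup\Lambda_r$. Let $\mathbf D_1\in\mathcal D_{\Lambda_1}$ and $\mathbf D_2\in\mathcal D_{\Lambda_2}$ be VMD tilings. Assume $|\Lambda_m|\ge6$ and that $\boldsymbol\sigma_{\Lambda_1}(\mathbf D_1)$ and $\boldsymbol\sigma_{\Lambda_2}(\mathbf D_2)$ agree on $\Lambda_m$. Then there is a unique VMD tiling $\mathbf D\in\mathcal D_\Lambda$ whose configuration $\boldsymbol\sigma_\Lambda(\mathbf D)$ restricted to $\Lambda_1$ equals $\boldsymbol\sigma_{\Lambda_1}(\mathbf D_1)$ and restricted to $\Lambda_2$ equals $\boldsymbol\sigma_{\Lambda_2}(\mathbf D_2)$.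
   Context: Tilings of a finite interval $\Lambda$: a tile occupies consecutive sites and carries a 0/1 word (its particle content): void $0$; monomer $100$; dimer $011000$; left boundary dimer $11000$ (allowed only as the first tile of $\Lambda$); and, allowed only as the last tile of $\Lambda$: right dimer $011$, right 1-monomer $1$, right 2-monomer $10$, truncated 1-dimer $0110$, truncated 2-dimer $01100$. A root tiling $R$ of $\Lambda$ is a tiling of $\Lambda$ by consecutive tiles consisting of voids and monomers, optionally with a left boundary dimer as first tile and optionally with one of right dimer, right 1-monomer, right 2-monomer as last tile; $\mathcal R_\Lambda$ denotes their set. A VMD tiling derived from $R$ is obtained by choosing a collection of disjoint pairs of consecutive tiles of $R$, each pair being either two monomers (replaced by a dimer) or a monomer followed by a right $j$-monomer, $j\in\{1,2\}$ (replaced by the truncated $j$-dimer); $\mathcal D_\Lambda(R)$ is the set of these and $\mathcal D_\Lambda=\bigcup_{R\in\mathcal R_\Lambda}\mathcal D_\Lambda(R)$. The configuration $\boldsymbol\sigma_\Lambda(\mathbf D)\in\{0,1\}^\Lambda$ of a tiling $\mathbf D$ is the concatenation of the particle contents of its tiles. *)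

(* Defs.v *)
From mathcomp Require Import all_boot.
Set Implicit Arguments. Unset Strict Implicit. Unset Printing Implicit Defensive.

Inductive tile :=
  | Void
  | Mono
  | Dimer
  | LDimer      (* 11000   : left boundary dimer, only first tile *)
  | RDimer      (* 011     : right dimer, only last tile *)
  | RMono1      (* 1       : right 1-monomer, only last tile *)
  | RMono2      (* 10      : right 2-monomer, only last tile *)
  | TDimer1     (* 0110    : truncated 1-dimer, only last tile *)
  | TDimer2.    (* 01100   : truncated 2-dimer, only last tile *)

(* particle content of a tile (true = 1, false = 0) *)
Definition word (t : tile) : seq bool :=
  match t with
  | Void => [:: false]
  | Mono => [:: true; false; false]
  | Dimer => [:: false; true; true; false; false; false]
  | LDimer => [:: true; true; false; false; false]
  | RDimer => [:: false; true; true]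
  | RMono1 => [:: true]
  | RMono2 => [:: true; false]
  | TDimer1 => [:: false; true; true; false]
  | TDimer2 => [:: false; true; true; false; false]
  end.

(* A tiling of an interval is the left-to-right list of its tiles;
   its configuration is the concatenation of the particle contents. *)
Definition config (D : seq tile) : seq bool := flatten (map word D).

Definition is_vm (t : tile) : bool :=
  match t with Void | Mono => true | _ => false end.

Definition is_right_root (t : tile) : bool :=
  match t with RDimer | RMono1 | RMono2 => true | _ => false end.

Definition root_tiling (n : nat) (R : seq tile) : Prop :=
  size (config R) = n /\
  exists (L M Rt : seq tile),
    R = L ++ M ++ Rt /\
    (L = [::] \/ L = [:: LDimer]) /\
    all is_vm M /\
    (Rt = [::] \/ exists t, Rt = [:: t] /\ is_right_root t).

Inductive derived : seq tile -> seq tile -> Prop :=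
  | der_nil : derived [::] [::]
  | der_keep t R D : derived R D -> derived (t :: R) (t :: D)
  | der_dimer R D : derived R D -> derived [:: Mono, Mono & R] (Dimer :: D)
  | der_trunc1 R D : derived R D -> derived [:: Mono, RMono1 & R] (TDimer1 :: D)
  | der_trunc2 R D : derived R D -> derived [:: Mono, RMono2 & R] (TDimer2 :: D).

Definition vmd_tiling (n : nat) (D : seq tile) : Prop :=
  exists R, root_tiling n R /\ derived R D.

(* Main.v *)
Require Import Defs.
From mathcomp Require Import all_boot.
From mathcomp Require Import zify.
Set Implicit Arguments. Unset Strict Implicit. Unset Printing Implicit Defensive.

Definition is_vmd (t : tile) : bool :=
  match t with Void | Mono | Dimer => true | _ => false end.

Fixpoint gm (D : seq tile) : bool :=
  match D with
  | [::] => true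
  | t :: D' => if D' is [::] then (if t is LDimer then false else true)
               else is_vmd t && gm D'
  end.

Definition good (D : seq tile) : bool :=
  match D with LDimer :: D' => gm D' | _ => gm D end.

Lemma gm_cons t D : is_vmd t -> gm D -> gm (t :: D).
Proof. by case: t => //= _; case: D. Qed.

Lemma gm_good D : gm D -> good D.
Proof. by case: D => // [[]] // [|t D]. Qed.

Definition delta (q : nat) (x : bool) : nat :=
  match q, x with
  | 1, false => 3 | 1, true => 10
  | 2, false => 3 | 2, true => 5
  | 3, false => 3 | 3, true => 4
  | 4, false => 6 | 4, true => 7
  | 5, false => 6
  | 6, false => 2
  | 7, false => 8
  | 8, false => 9
  | 9, false => 2
  | 10, false => 6 | 10, true => 11
  | 11, false => 12
  | 12, false => 13
  | 13, false => 2
  | _, _ => 0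
  end.

Definition run q w := foldl delta q w.
Definition acc q := (0 < q <= 10).

Lemma run0 w : run 0 w = 0.
Proof. by elim: w => //= [[]]. Qed.

Lemma run_cat q a b : run q (a ++ b) = run (run q a) b.
Proof. by rewrite /run foldl_cat. Qed.

Lemma config_cons t D : config (t :: D) = word t ++ config D.
Proof. by []. Qed.

Lemma gm_acc D q : (q == 1) || (q == 2) || (q == 3) -> gm D -> acc (run q (config D)).
Proof.
elim: D q => [|t D IH] q Hq /=.
  by move=> _; case/orP: Hq => [/orP[]|] /eqP ->.
case: D IH => [|t' D] IH.
  by case/orP: Hq => [/orP[]|] /eqP -> ; case: t.
move=> /andP [Ht HD].
rewrite run_cat; apply: IH => //.
by case/orP: Hq => [/orP[]|] /eqP ->; case: t Ht.
Qed.

Lemma good_acc D : good D -> acc (run 1 (config D)).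
Proof.
case: D => [|t D] //.
case: t => H; try (by apply: gm_acc).
by rewrite config_cons run_cat; apply: gm_acc.
Qed.

Ltac kill H := rewrite /= ?run0 in H; discriminate H.

Lemma acc_gm_aux n : forall w, size w <= n ->
  (acc (run 2 w) -> exists D, gm D /\ config D = w) /\
  (acc (run 3 w) -> exists D, gm D /\ config D = false :: w).
Proof.
elim: n => [|n IH] w.
  case: w => // _; split=> _; [by exists [::] | by exists [:: Void]].
move=> Hs; split.
- case: w Hs => [|[] w] Hs H.
  + by exists [::].
  + case: w Hs H => [|[] w] Hs H; first by exists [:: RMono1].
      by kill H.
    case: w Hs H => [|[] w] Hs H; first by exists [:: RMono2].
      by kill H.
    have [/(_ H) [D [HD HC]] _] := IH w (leq_trans (leqnSn _) (ltnW Hs)).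
    exists (Mono :: D); split; first exact: gm_cons.
    by rewrite config_cons HC.
  + have [_ /(_ H) [D [HD HC]]] := IH w Hs.
    by exists D.
- case: w Hs => [|[] w] Hs H.
  + by exists [:: Void].
  + case: w Hs H => [|[] w] Hs H; first by exists [:: Void; RMono1].
      case: w Hs H => [|[] w] Hs H; first by exists [:: RDimer].
        by kill H.
      case: w Hs H => [|[] w] Hs H; first by exists [:: TDimer1].
        by kill H.
      case: w Hs H => [|[] w] Hs H; first by exists [:: TDimer2].
        by kill H.
      have Hw : size w <= n by move: Hs => /=; lia.
      have [/(_ H) [D [HD HC]] _] := IH w Hw.
      exists (Dimer :: D); split; first exact: gm_cons.
      by rewrite config_cons HC.
    case: w Hs H => [|[] w] Hs H; first by exists [:: Void; RMono2].
      by kill H.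
    have Hw : size w <= n by move: Hs => /=; lia.
    have [/(_ H) [D [HD HC]] _] := IH w Hw.
    exists [:: Void, Mono & D]; split; first by apply: gm_cons => //; apply: gm_cons.
    by rewrite !config_cons HC.
  + have [_ /(_ H) [D [HD HC]]] := IH w Hs.
    exists (Void :: D); split; first exact: gm_cons.
    by rewrite config_cons HC.
Qed.

Lemma acc_good w : acc (run 1 w) -> exists D, good D /\ config D = w.
Proof.
have M w' : acc (run 2 w') -> exists D, gm D /\ config D = w'.
  by case: (acc_gm_aux (leqnn (size w'))).
have Z w' : acc (run 3 w') -> exists D, gm D /\ config D = false :: w'.
  by case: (acc_gm_aux (leqnn (size w'))).
case: w => [|[] w] H.
- by exists [::].
- case: w H => [|[] w] H; first by exists [:: RMono1].
    case: w H => [|[] w] H; first by kill H.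
      by kill H.
    case: w H => [|[] w] H; first by kill H.
      by kill H.
    case: w H => [|[] w] H; first by kill H.
      by kill H.
    have [D [HD HC]] := M w H.
    by exists (LDimer :: D); rewrite config_cons HC.
  case: w H => [|[] w] H; first by exists [:: RMono2].
    by kill H.
  have [D [HD HC]] := M w H.
  exists (Mono :: D); split; last by rewrite config_cons HC.
  by apply: gm_good; apply: gm_cons.
- have [D [HD HC]] := Z w H.
  by exists D; split => //; apply: gm_good.
Qed.

Fixpoint parse_mid (s : seq bool) : seq tile :=
  match s with
  | [::] => [::]
  | false :: s' =>
    match s' with
    | true :: true :: false :: false :: false :: s'' => Dimer :: parse_mid s''
    | [:: true; true; false; false] => [:: TDimer2]
    | [:: true; true; false] => [:: TDimer1]
    | [:: true; true] => [:: RDimer]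
    | _ => Void :: parse_mid s'
    end
  | true :: s' =>
    match s' with
    | false :: false :: s'' => Mono :: parse_mid s''
    | [:: false] => [:: RMono2]
    | [::] => [:: RMono1]
    | _ => [::]
    end
  end.

Definition parse (s : seq bool) : seq tile :=
  match s with
  | true :: true :: false :: false :: false :: s' => LDimer :: parse_mid s'
  | _ => parse_mid s
  end.

Lemma gm_head D : gm D -> D <> [::] ->
  config D = [:: true] \/ (exists s, config D = [:: true, false & s]) \/
  exists s, config D = false :: s.
Proof.
case: D => [|t D] // H _; case: t H => /= H; try by right; right; eexists.
all: try by right; left; eexists.
all: try by left.
all: case: D H => [|? ?] //= _; by left.
Qed.

Lemma parse_mid_ok D : gm D -> parse_mid (config D) = D.
Proof.
elim: D => [|t D IH] // H.
case: D IH H => [|t' D] IH H; first by case: t H.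
have /andP [Ht HD] : is_vmd t && gm (t' :: D) := H.
have E := IH HD.
have Hh := gm_head HD ltac:(by []).
rewrite config_cons.
move: (config (t' :: D)) E Hh => c E Hh.
suff -> : parse_mid (word t ++ c) = t :: parse_mid c by rewrite E.
clear H IH E HD.
case: t Ht => // _ /=.
by case: Hh => [->|[[s ->]|[s ->]]].
Qed.

Definition isL t := if t is LDimer then true else false.

Lemma parse_nonL t D : ~~ isL t -> gm (t :: D) ->
  parse (config (t :: D)) = parse_mid (config (t :: D)).
Proof.
rewrite config_cons; case: t => // _; case: D => [|t' D] //.
Qed.

Lemma parse_ok D : good D -> parse (config D) = D.
Proof.
case: D => [|t D] // H.
case NE: (isL t).
  by case: t NE H => // _ H; rewrite config_cons /= parse_mid_ok.
move/negbT: NE => NE.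
have G : gm (t :: D) by case: t H NE.
by rewrite parse_nonL // parse_mid_ok.
Qed.

Lemma config_inj D D' : good D -> good D' -> config D = config D' -> D = D'.
Proof. by move=> H H' E; rewrite -(parse_ok H) -(parse_ok H') E. Qed.

Fixpoint gr (R : seq tile) : bool :=
  match R with
  | [::] => true
  | t :: R' => if R' is [::] then is_vm t || is_right_root t else is_vm t && gr R'
  end.

Lemma derived_size R D : derived R D -> size (config R) = size (config D).
Proof.
elim=> // [t|||] R' D' _ IH; rewrite !config_cons !size_cat IH //=; lia.
Qed.

Lemma derived_nilR D : derived [::] D -> D = [::].
Proof. by move=> H; inversion H. Qed.

Lemma derived_nilD R : derived R [::] -> R = [::].
Proof. by move=> H; inversion H. Qed.

Lemma derived_gm R D : derived R D -> gr R -> gm D.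
Proof.
elim=> // [t R' D' HRD IH|R' D' HRD IH|R' D' HRD IH|R' D' HRD IH].
- case: R' HRD IH => [|t' R'] HRD IH.
    by rewrite (derived_nilR HRD); case: t.
  case/andP => Ht HR; apply: gm_cons; last exact: IH.
  by case: t Ht.
- case: R' HRD IH => [|t' R'] HRD IH.
    by rewrite (derived_nilR HRD).
  move=> H; apply: gm_cons => //; apply: IH; exact: H.
- by case: R' HRD IH => [|t' R'] HRD IH //; rewrite (derived_nilR HRD).
- by case: R' HRD IH => [|t' R'] HRD IH //; rewrite (derived_nilR HRD).
Qed.

Lemma gr_cat M Rt : all is_vm M ->
  (Rt = [::] \/ exists t, Rt = [:: t] /\ is_right_root t) -> gr (M ++ Rt).
Proof.
elim: M => [|t M IH].
  by move=> _ [->|[t [-> H]]] //=; apply/orP; right.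
move=> /= /andP [Ht HM] HRt.
case: M IH HM => [|t' M] IH HM /=.
  by case: HRt => [->|[u [-> Hu]]] /=; rewrite Ht ?Hu ?orbT.
by rewrite Ht; apply: IH.
Qed.

Lemma gr_split R : gr R -> exists M Rt, R = M ++ Rt /\ all is_vm M /\
    (Rt = [::] \/ exists t, Rt = [:: t] /\ is_right_root t).
Proof.
elim: R => [|t R IH] /=.
  by move=> _; exists [::], [::]; split=> //; split=> //; left.
case: R IH => [|t' R] IH.
  case/orP=> H.
    by exists [:: t], [::]; rewrite /= H; split=> //; split=> //; left.
  by exists [::], [:: t]; split=> //; split=> //; right; exists t.
case/andP=> Ht /IH [M [Rt [E [HM HRt]]]].
by exists (t :: M), Rt; rewrite E /= Ht.
Qed.

Lemma gm_derived D : gm D -> exists R, gr R /\ derived R D.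
Proof.
elim: D => [|t D IH]; first by exists [::]; split=> //; constructor.
case: D IH => [|t' D] IH.
  case: t => // _.
  - by exists [:: Void]; split=> //; do 2 constructor.
  - by exists [:: Mono]; split=> //; do 2 constructor.
  - by exists [:: Mono; Mono]; split=> //; do 2 constructor.
  - by exists [:: RDimer]; split=> //; do 2 constructor.
  - by exists [:: RMono1]; split=> //; do 2 constructor.
  - by exists [:: RMono2]; split=> //; do 2 constructor.
  - by exists [:: Mono; RMono1]; split=> //; do 2 constructor.
  - by exists [:: Mono; RMono2]; split=> //; do 2 constructor.
move=> /= /andP [Ht /IH [R [HR HRD]]].
case: R HR HRD => [|u R] HR HRD; first by have := derived_nilR HRD.
case: t Ht => // _.
- by exists [:: Void, u & R]; split=> //; constructor.
- by exists [:: Mono, u & R]; split=> //; constructor.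
- by exists [:: Mono, Mono, u & R]; split=> //; constructor.
Qed.

Lemma vmd_good n D : vmd_tiling n D <-> good D /\ size (config D) = n.
Proof.
split.
- case=> R [[Hs [L [M [Rt [E [HL [HM HRt]]]]]]] HRD].
  rewrite -(derived_size HRD); split=> //.
  have G := gr_cat HM HRt.
  case: HL E => -> /= E.
    by apply: gm_good; apply: (derived_gm HRD); rewrite E.
  rewrite E in HRD; inversion HRD; subst.
  by apply: (derived_gm H2).
- case=> HD Hs.
  case: D HD Hs => [|t D] HD Hs.
    exists [::]; split; last by constructor.
    by split=> //; exists [::], [::], [::]; split=> //; split; [left|split=> //; left].
  case E: (isL t).
    case: t E HD Hs => // _ HD Hs.
    have [R [HR HRD]] := gm_derived HD.
    have [M [Rt [ER [HM HRt]]]] := gr_split HR.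
    exists (LDimer :: R); split; last by constructor.
    split; first by rewrite -Hs config_cons size_cat (derived_size HRD).
    by exists [:: LDimer], M, Rt; rewrite ER; split=> //; split=> //; right.
  have G : gm (t :: D) by move: E HD; clear Hs; case: t.
  have [R [HR HRD]] := gm_derived G.
  have [M [Rt [ER [HM HRt]]]] := gr_split HR.
  exists R; split=> //.
  split; first by rewrite -Hs (derived_size HRD).
  by exists [::], M, Rt; rewrite ER; split=> //; split=> //; left.
Qed.

Fixpoint syncck (n : nat) (ps : seq nat) : bool :=
  if n is n'.+1 then syncck n' [seq delta p true | p <- ps] &&
                     syncck n' [seq delta p false | p <- ps]
  else let ps' := [seq p <- ps | p != 0] in all (fun p => p == head 0 ps') ps'.

Lemma syncck_ok : syncck 6 (iota 1 13).
Proof. by vm_compute. Qed.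

Lemma syncck_spec n ps : syncck n ps -> forall w p p', size w = n ->
  p \in ps -> p' \in ps -> run p w != 0 -> run p' w != 0 -> run p w = run p' w.
Proof.
elim: n ps => [|n IH] ps /=.
  move=> H [|//] p p' _ Hp Hp' /= n0 n0'.
  have Hf : forall x, x \in ps -> x != 0 -> x = head 0 [seq p <- ps | p != 0].
    by move=> x Hx Hx0; apply/eqP; apply: (allP H); rewrite mem_filter Hx0.
  by rewrite (Hf p) // (Hf p').
move=> /andP [Ht Hf] [|b w] //= p p' [Hs] Hp Hp'.
case: b.
  by apply: (IH _ Ht) => //; apply: map_f.
by apply: (IH _ Hf) => //; apply: map_f.
Qed.

Lemma delta_big p b : 13 < p -> delta p b = 0.
Proof. by do 14 (case: p => [|p] //); case: b. Qed.

Lemma sync w p p' : 6 <= size w -> p != 0 -> p' != 0 ->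
  run p w != 0 -> run p' w != 0 -> run p w = run p' w.
Proof.
move=> Hs Hp Hp'.
rewrite -(cat_take_drop (size w - 6) w) !run_cat.
have Hd : size (drop (size w - 6) w) = 6 by rewrite size_drop; lia.
move: (drop _ w) Hd => d Hd.
have big q : 13 < q -> run q d = 0.
  move=> Hq; case: d Hd => [|x d] // _ /=.
  by rewrite delta_big // run0.
move: (run p _) (run p' _) => q q' Hq Hq'.
have Hin : forall x, run x d != 0 -> x \in iota 1 13.
  move=> x Hx; rewrite mem_iota.
  case: (ltnP 13 x) => [/big E|Hx13]; first by rewrite E in Hx.
  case: x Hx Hx13 => [|x]; first by rewrite run0.
  move=> _ H13; apply/andP; split=> //; lia.
by apply: (syncck_spec syncck_ok) => //; apply: Hin.
Qed.

Theorem lemma2p3 (l m r : nat) (D1 D2 : seq tile) :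
  6 <= m ->
  vmd_tiling (l + m) D1 ->
  vmd_tiling (m + r) D2 ->
  drop l (config D1) = take m (config D2) ->
  exists! D : seq tile,
    vmd_tiling (l + m + r) D /\
    take (l + m) (config D) = config D1 /\
    drop l (config D) = config D2.
Proof.
move=> Hm /vmd_good [G1 S1] /vmd_good [G2 S2] E.
set a := take l (config D1).
set b := drop l (config D1).
set c := drop m (config D2).
have Hb : size b = m by rewrite /b size_drop S1; lia.
have E1 : config D1 = a ++ b by rewrite cat_take_drop.
have E2 : config D2 = b ++ c by rewrite /b E cat_take_drop.
set w := config D1 ++ c.
have Aw : acc (run 1 w).
  have A1 := good_acc G1; have A2 := good_acc G2.
  rewrite E1 run_cat in A1; rewrite E2 run_cat in A2.
  rewrite /w E1 -catA !run_cat.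
  have nz q : acc q -> q != 0 by case: q.
  have Ha : run 1 a != 0.
    by apply/eqP => Z; rewrite Z run0 in A1.
  have Hb1 : run 1 b != 0.
    by apply/eqP => Z; rewrite Z run0 in A2.
  by rewrite (sync (w := b) (p' := 1)) // ?Hb // nz.
have [D [GD CD]] := acc_good Aw.
have Hsw : size w = l + m + r by rewrite /w size_cat /c size_drop S1 S2; lia.
have P : forall D', vmd_tiling (l + m + r) D' /\ take (l + m) (config D') = config D1 /\
    drop l (config D') = config D2 -> D' = D.
  move=> D' [/vmd_good [G' S'] [T' Dr']].
  apply: config_inj => //; rewrite CD /w /c -T' -Dr' drop_drop.
  by rewrite addnC cat_take_drop.
exists D; split; last by move=> D' /P.
split; first by apply/vmd_good; rewrite CD.
rewrite CD /w; split.
  by rewrite take_size_cat.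
rewrite drop_cat S1 ifT; last lia.
by rewrite -/b E2.
Qed.
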